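(* Given an LDODOSP instance, period counters $(S^d,T^d)_{d\in\{1,\dots,D\}}$ are feasible if and only if they satisfy all of the following: $T^1=0$; for all $1\le d\le D-1$: $S^d\le S^{d+1}$, $T^d\le T^{d+1}$, $T^{d+1}\le S^d$, $S^{d+1}\le T^d+N$; $T^{l_w}=0$ and $S^{D-l_w+1}=S^D$; $T^{d+l_w}\le S^d$ for all $1\le d\le D-l_w$; $S^d\le T^{d+u_w}$ for all $1\le d\le D-u_w$; $S^1=S^{l_o}$ and $T^{D-l_o+1}=T^D$; $S^{d+l_o}-N\le T^d$ for all $1\le d\le D-l_o$; $T^d+N\le S^{d+u_o}$ for all $1\le d\le D-u_o$; $r_l^d\le S^d-T^d\le r_u^d$ for all $1\le d\le D$.
   Context: An instance of the Days On Days Off Scheduling Problem (DODOSP) consists of integers $D\ge 1$ (days), $N\ge 1$ (workers), bounds $l_w,u_w,l_o,u_o,U_w,U_o\in\mathbb{N}$, and for each day $d\in\{1,\dots,D\}$ integers $0\le r_l^d\le r_u^d\le N$. A schedule is a map $f:\{n_1,\dots,n_N\}\times\{1,\dots,D\}\to\{\mathrm{ON},\mathrm{OFF}\}$ (not cyclic). A work period (resp. off period) of a worker is an inclusion-wise maximal set of consecutive days on which the worker is ON (resp. OFF). A schedule is feasible if on every day $d$ the number of workers that are ON lies in $[r_l^d,r_u^d]$, every work period has length between $l_w$ and $u_w$, every off period has length between $l_o$ and $u_o$, every worker is ON on at most $U_w$ days and OFF on at most $U_o$ days. The LDODOSP is the DODOSP restricted to instances with $U_w=U_o=D$. Integers $(S^d,T^d)_{d\in\{1,\dots,D\}}$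 are called period counters if there is some schedule for $N$ workers on $D$ days (not necessarily feasible) such that for each $d$, $S^d$ is the number of work periods (over all workers) whose first day is among days $1,\dots,d$, and $T^d$ is the number of work periods whose last day is among days $1,\dots,d-1$; they then represent that schedule. Period counters are feasible if they represent a feasible schedule of the instance. *)

(* Defs.v *)
From mathcomp Require Import all_boot.
Set Implicit Arguments. Unset Strict Implicit. Unset Printing Implicit Defensive.

(* An instance of DODOSP. Days are 1..D; the per-day bounds rl, ru are only
   meaningful on days 1..D. *)
Record instance := Instance {
  D : nat; N : nat;
  lw : nat; uw : nat; lo : nat; uo : nat; Uw : nat; Uo : nat;
  rl : nat -> nat; ru : nat -> nat }.

Definition valid_instance (I : instance) : Prop :=
  1 <= D I /\ 1 <= N I /\
  (forall d, 1 <= d <= D I -> rl I d <= ru I d /\ ru I d <= N I).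

Definition LDODOSP_instance (I : instance) : Prop :=
  valid_instance I /\ Uw I = D I /\ Uo I = D I.

(* A schedule: worker n is ON on day d iff f n d = true.  Only days 1..D
   are ever inspected by the definitions below. *)
Definition schedule (I : instance) := 'I_(N I) -> nat -> bool.

Section Sched.
Variables (I : instance) (f : schedule I).

Definition work_period (n : 'I_(N I)) (a b : nat) : Prop :=
  1 <= a /\ a <= b /\ b <= D I /\
  (forall d, a <= d <= b -> f n d) /\
  ((a == 1) || ~~ f n a.-1) /\
  ((b == D I) || ~~ f n b.+1).

Definition off_period (n : 'I_(N I)) (a b : nat) : Prop :=
  1 <= a /\ a <= b /\ b <= D I /\
  (forall d, a <= d <= b -> ~~ f n d) /\
  ((a == 1) || f n a.-1) /\
  ((b == D I) || f n b.+1).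

Definition num_on (d : nat) : nat := \sum_(n < N I) f n d.

Definition days_on (n : 'I_(N I)) : nat := \sum_(1 <= d < (D I).+1) f n d.
Definition days_off (n : 'I_(N I)) : nat := \sum_(1 <= d < (D I).+1) ~~ f n d.

Definition feasible_schedule : Prop :=
  (forall d, 1 <= d <= D I -> rl I d <= num_on d <= ru I d) /\
  (forall n a b, work_period n a b -> lw I <= b - a + 1 <= uw I) /\
  (forall n a b, off_period n a b -> lo I <= b - a + 1 <= uo I) /\
  (forall n, days_on n <= Uw I) /\
  (forall n, days_off n <= Uo I).

Definition starts_at (n : 'I_(N I)) (d : nat) : bool :=
  f n d && ((d == 1) || ~~ f n d.-1).
Definition ends_at (n : 'I_(N I)) (d : nat) : bool :=
  f n d && ((d == D I) || ~~ f n d.+1).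

Definition S_count (d : nat) : nat :=
  \sum_(1 <= e < d.+1) \sum_(n < N I) starts_at n e.
(* number of work periods whose last day is among 1..d-1 *)
Definition T_count (d : nat) : nat :=
  \sum_(1 <= e < d) \sum_(n < N I) ends_at n e.

Definition represents (S T : nat -> nat) : Prop :=
  forall d, 1 <= d <= D I -> S d = S_count d /\ T d = T_count d.

End Sched.

Definition period_counters (I : instance) (S T : nat -> nat) : Prop :=
  exists f : schedule I, represents f S T.

Definition feasible_counters (I : instance) (S T : nat -> nat) : Prop :=
  exists f : schedule I, represents f S T /\ feasible_schedule f.

(* Main.v *)
Require Import Defs.
From mathcomp Require Import all_boot.
From mathcomp Require Import zify.
Set Implicit Arguments. Unset Strict Implicit.

Definition st (D : nat) (h : nat -> bool) d :=
  \sum_(1 <= e < d.+1) (h e && ((e == 1) || ~~ h e.-1)).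
Definition en (D : nat) (h : nat -> bool) d :=
  \sum_(1 <= e < d.+1) (h e && ((e == D) || ~~ h e.+1)).
Definition run (D : nat) (h : nat -> bool) a b :=
  1 <= a /\ a <= b /\ b <= D /\
  (forall d, a <= d <= b -> h d) /\
  ((a == 1) || ~~ h a.-1) /\
  ((b == D) || ~~ h b.+1).

Lemma sum_mono (F : nat -> nat) x y : x <= y ->
  \sum_(1 <= e < x.+1) F e <= \sum_(1 <= e < y.+1) F e.
Proof.
move=> xy; rewrite (@big_cat_nat _ _ _ x.+1 1 y.+1) //=; try lia.
Qed.

Lemma sum0 (F : nat -> nat) : \sum_(1 <= e < 1) F e = 0.
Proof. by rewrite big_geq. Qed.

Lemma st_mono D h x y : x <= y -> st D h x <= st D h y.
Proof. exact: sum_mono. Qed.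
Lemma en_mono D h x y : x <= y -> en D h x <= en D h y.
Proof. exact: sum_mono. Qed.

Lemma stS D h d : st D h d.+1 = st D h d + (h d.+1 && ((d.+1 == 1) || ~~ h d)).
Proof. by rewrite /st big_nat_recr. Qed.
Lemma enS D h d : en D h d.+1 = en D h d + (h d.+1 && ((d.+1 == D) || ~~ h d.+2)).
Proof. by rewrite /en big_nat_recr. Qed.
Lemma st0 D h : st D h 0 = 0. Proof. exact: sum0. Qed.
Lemma en0 D h : en D h 0 = 0. Proof. exact: sum0. Qed.

Lemma alt D (h : nat -> bool) d : 1 <= d <= D -> st D h d = en D h d.-1 + h d.
Proof.
elim: d => [|d IH] //= Hd.
case: d IH Hd => [|d] IH Hd.
  by rewrite stS st0 en0 /=; case: (h 1).
rewrite stS enS IH; last lia.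
have -> : (d.+1 == D) = false by apply/eqP; lia.
rewrite /=. case: (h d.+1); case: (h d.+2) => /=; lia.
Qed.

Lemma run_start (h : nat -> bool) b : 1 <= b -> h b -> exists a, 1 <= a <= b /\
  (forall d, a <= d <= b -> h d) /\ ((a == 1) || ~~ h a.-1).
Proof.
elim: b => [|b IH] // _ hb.
case: b IH hb => [|b] IH hb.
  exists 1; split => //; split => // d Hd; have -> : d = 1 by lia. done.
case E: (h b.+1).
  have [a [Ha [Hon Hs]]] := IH erefl E.
  exists a; split; first lia; split => // d Hd.
  case: (ltnP d b.+2) => Hd2; first by apply: Hon; lia.
  by have -> : d = b.+2 by lia.
exists b.+2; split; first lia; split; last by rewrite /= E.
move=> d Hd; by have -> : d = b.+2 by lia.
Qed.

Lemma run_end D (h : nat -> bool) a : 1 <= a <= D -> h a -> exists b, a <= b <= D /\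
  (forall d, a <= d <= b -> h d) /\ ((b == D) || ~~ h b.+1).
Proof.
move=> Ha; move: {2}(D - a) (erefl (D - a)) => m.
elim: m a Ha => [|m IH] a Ha Em ha.
  exists a; split; first lia; split.
    move=> d Hd; by have -> : d = a by lia.
  have -> : a = D by lia.
  by rewrite eqxx.
case E: (h a.+1).
  have [b [Hb [Hon He]]] := IH a.+1 ltac:(lia) ltac:(lia) E.
  exists b; split; first lia; split => // d Hd.
  case: (ltnP a d) => Hd2; first by apply: Hon; lia.
  by have -> : d = a by lia.
exists a; split; first lia; split; last by rewrite E orbT.
move=> d Hd; by have -> : d = a by lia.
Qed.

Lemma run_const D (h : nat -> bool) a b : 1 <= a -> a <= b -> b <= D ->
  (forall d, a <= d <= b -> h d) ->
  st D h b = st D h a /\ en D h b.-1 = en D h a.-1.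
Proof.
move=> a1 ab bD Hon.
have [j Ej] : exists j, b = a + j by exists (b - a); lia.
subst b.
move: ab bD Hon; elim: j => [|j IH] ab bD Hon; first by rewrite addn0.
have Hon' : forall d, a <= d <= a + j -> h d by move=> d Hd; apply: Hon; lia.
have [IH1 IH2] := IH ltac:(lia) ltac:(lia) Hon'.
rewrite addnS stS IH1.
have h1 : h (a + j) by apply: Hon; lia.
have h2 : h (a + j).+1 by apply: Hon; lia.
rewrite h1 /= orbF.
have -> : (a + j).+1 == 1 = false by apply/eqP; lia.
rewrite andbF addn0; split => //.
rewrite -IH2.
have Hx : (a + j).+1 <= D by lia.
move: h1 h2 Hx; case E: (a + j) => [|x] h1 h2 Hx; first lia.
rewrite /= enS h2 /=.
have -> : (x.+1 == D) = false by apply/eqP; lia.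
by rewrite andbF addn0.
Qed.

Lemma lower_bound D (h : nat -> bool) l : 1 <= l ->
  (forall a b, run D h a b -> l <= b - a + 1) ->
  forall x, x <= D -> en D h x <= st D h (x.+1 - l).
Proof.
move=> l1 Hr; elim => [|x IH] xD; first by rewrite en0.
rewrite enS.
case E: (h x.+1 && ((x.+1 == D) || ~~ h x.+2)).
  move/andP: E => [hx Hend].
  have [a [Ha [Hon Hs]]] := run_start (h:=h) (b:=x.+1) erefl hx.
  have Hrun : run D h a x.+1 by repeat split => //; lia.
  have := Hr _ _ Hrun => Hl.
  have [_ E2] := run_const (D:=D) (h:=h) (a:=a) (b:=x.+1) ltac:(lia) ltac:(lia) xD Hon.
  rewrite /= in E2; rewrite E2 addn1.
  have := (@alt D h a) ltac:(lia).
  rewrite (Hon a ltac:(lia)) addn1 => <-.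
  apply: st_mono; lia.
rewrite addn0; apply: leq_trans (IH ltac:(lia)) _; apply: st_mono; lia.
Qed.

Lemma upper_bound D (h : nat -> bool) u :
  (forall a b, run D h a b -> b - a + 1 <= u) ->
  forall d, d <= D -> st D h d <= en D h (d + u).-1.
Proof.
move=> Hr; elim => [|d IH] dD; first by rewrite st0.
rewrite stS.
case E: (h d.+1 && ((d.+1 == 1) || ~~ h d)).
  move/andP: E => [hd Hst].
  have [b [Hb [Hon He]]] := run_end (D:=D) (h:=h) (a:=d.+1) ltac:(lia) hd.
  have Hrun : run D h d.+1 b by repeat split => //; lia.
  have := Hr _ _ Hrun => Hu.
  have [_ E2] := run_const (D:=D) (h:=h) (a:=d.+1) (b:=b) ltac:(lia) ltac:(lia) ltac:(lia) Hon.
  have A := (@alt D h d.+1) ltac:(lia).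
  rewrite hd /= in A.
  have Eb : en D h b = en D h b.-1 + 1.
    case: b Hb Hon He {Hrun Hu E2} => [|b] Hb Hon He; first lia.
    rewrite enS /= (Hon b.+1 ltac:(lia)) He; done.
  have : st D h d.+1 = en D h b by rewrite Eb E2 -A.
  have -> : st D h d + true = st D h d.+1 by rewrite stS hd Hst.
  move=> ->; apply: en_mono; lia.
rewrite addn0; apply: leq_trans (IH ltac:(lia)) _; apply: en_mono; lia.
Qed.

Lemma st_neg D (h : nat -> bool) d : 1 <= d <= D ->
  st D (fun e => ~~ h e) d = ~~ h 1 + en D h d.-1.
Proof.
elim: d => [|d IH] //= Hd.
case: d IH Hd => [|d] IH Hd.
  by rewrite stS st0 en0 /=; case: (h 1).
rewrite stS IH; last lia.
rewrite /= enS.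
have -> : (d.+1 == D) = false by apply/eqP; lia.
rewrite /=. case: (h d.+1); case: (h d.+2) => /=; lia.
Qed.

Lemma en_neg D (h : nat -> bool) d : d < D ->
  en D (fun e => ~~ h e) d + h 1 = st D h d.+1.
Proof.
elim: d => [|d IH] Hd.
  by rewrite en0 stS st0 /=; case: (h 1).
rewrite enS stS -IH; last lia.
have -> : (d.+1 == D) = false by apply/eqP; lia.
rewrite /=. case: (h d.+1); case: (h d.+2) => /=; lia.
Qed.

Lemma en_negD D (h : nat -> bool) : 1 <= D ->
  en D (fun e => ~~ h e) D = en D (fun e => ~~ h e) D.-1 + ~~ h D.
Proof.
case: D => [|D] // _; rewrite enS eqxx /=; by rewrite andbT.
Qed.

Lemma run_neg D (h : nat -> bool) a b :
  1 <= a /\ a <= b /\ b <= D /\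
  (forall d, a <= d <= b -> ~~ h d) /\
  ((a == 1) || h a.-1) /\ ((b == D) || h b.+1) ->
  run D (fun e => ~~ h e) a b.
Proof. by rewrite /run !negbK. Qed.

Lemma worker_props D lw uw lo uo (h : nat -> bool) :
  1 <= D -> 1 <= lw <= D -> 1 <= lo <= D ->
  (forall a b, run D h a b -> lw <= b - a + 1 <= uw) ->
  (forall a b, run D (fun e => ~~ h e) a b -> lo <= b - a + 1 <= uo) ->
  (forall d, 1 <= d <= D - 1 ->
     st D h d <= st D h d.+1 /\ en D h d.-1 <= en D h d.+1.-1 /\
     en D h d.+1.-1 <= st D h d /\ st D h d.+1 <= en D h d.-1 + 1) /\
  (en D h lw.-1 = 0 /\ st D h (D - lw + 1) = st D h D) /\
  (forall d, 1 <= d <= D - lw -> en D h (d + lw).-1 <= st D h d) /\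
  (forall d, 1 <= d <= D - uw -> st D h d <= en D h (d + uw).-1) /\
  (st D h 1 = st D h lo /\ en D h (D - lo + 1).-1 = en D h D.-1) /\
  (forall d, 1 <= d <= D - lo -> st D h (d + lo) <= en D h d.-1 + 1) /\
  (forall d, 1 <= d <= D - uo -> en D h d.-1 + 1 <= st D h (d + uo)) /\
  (forall d, 1 <= d <= D -> st D h d = en D h d.-1 + h d).
Proof.
move=> D1 Hlw Hlo Hw Ho.
have LW := lower_bound (h:=h) (l:=lw) ltac:(lia) (fun a b r => proj1 (andP (Hw a b r))).
have UW := upper_bound (h:=h) (u:=uw) (fun a b r => proj2 (andP (Hw a b r))).
have LO := lower_bound (h:=fun e => ~~ h e) (l:=lo) ltac:(lia) (fun a b r => proj1 (andP (Ho a b r))).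
have UO := upper_bound (h:=fun e => ~~ h e) (u:=uo) (fun a b r => proj2 (andP (Ho a b r))).
have ALT := @alt D h.
have ST1 : st D h 1 = h 1 by rewrite (ALT 1) ?en0 //; lia.
split.
  move=> d Hd; split; first by apply: st_mono.
  split; first by apply: en_mono; lia.
  have A1 := ALT d ltac:(lia); have A2 := ALT d.+1 ltac:(lia).
  rewrite /= in A2 *.
  have E : en D h d = en D h d.-1 + (h d && ((d == D) || ~~ h d.+1)).
    by case: d Hd {A1 A2} => [|d] Hd; [lia | rewrite enS].
  have HHH : (d == D) = false by apply/eqP; lia. rewrite HHH in E.
  rewrite A1 A2 E; case: (h d); case: (h d.+1) => /=; lia.
split.
  split.
    have := LW lw.-1 ltac:(lia); have -> : lw.-1.+1 - lw = 0 by lia.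
    by rewrite st0; case: (en D h lw.-1).
  have := LW D (leqnn _).
  have A := ALT D ltac:(lia).
  have E : en D h D = en D h D.-1 + h D.
    by case: D D1 {LW UW LO UO ALT ST1 A Hlw Hlo Hw Ho} => [|D] D1 //; rewrite enS eqxx andbT.
  have M := @st_mono D h (D - lw + 1) D ltac:(lia).
  have -> : D.+1 - lw = D - lw + 1 by lia.
  lia.
split.
  move=> d Hd; have := LW (d + lw).-1 ltac:(lia).
  by have -> : (d + lw).-1.+1 - lw = d by lia.
split.
  move=> d Hd; apply: UW; lia.
split.
  split.
    have := LO lo.-1 ltac:(lia); have -> : lo.-1.+1 - lo = 0 by lia.
    rewrite st0 leqn0 => /eqP E0.
    have := @en_neg D h lo.-1 ltac:(lia).
    rewrite E0 ST1 /= => E2. have HH : lo.-1.+1 = lo by lia. by rewrite HH in E2.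
  have := LO D (leqnn _).
  rewrite en_negD //.
  have -> : D.+1 - lo = D - lo + 1 by lia.
  rewrite (@st_neg D h (D - lo + 1)); last lia.
  have E1 := @en_neg D h D.-1 ltac:(lia).
  have HHH : D.-1.+1 = D by lia. rewrite HHH in E1.
  have A := ALT D ltac:(lia).
  have M := @en_mono D h (D - lo + 1).-1 D.-1 ltac:(lia).
  move: E1 A M; case: (h 1); case: (h D) => /=; lia.
split.
  move=> d Hd.
  have := LO (d + lo).-1 ltac:(lia).
  have -> : (d + lo).-1.+1 - lo = d by lia.
  rewrite (@st_neg D h d); last lia.
  have E1 := @en_neg D h (d + lo).-1 ltac:(lia).
  have HHH : (d + lo).-1.+1 = d + lo by lia. rewrite HHH in E1.
  move: E1; case: (h 1) => /=; lia.
split.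
  move=> d Hd.
  have := UO d ltac:(lia).
  rewrite (@st_neg D h d); last lia.
  have E1 := @en_neg D h (d + uo).-1 ltac:(lia).
  have HHH : (d + uo).-1.+1 = d + uo by lia. rewrite HHH in E1.
  move: E1; case: (h 1) => /=; lia.
exact: ALT.
Qed.

Definition inW (N a b i : nat) : bool := has (fun k => k %% N == i) (iota a (b - a)).

Lemma inWP N a b i : reflect (exists k, [/\ a <= k, k < b & k %% N = i]) (inW N a b i).
Proof.
apply: (iffP hasP) => [[k]|[k [H1 H2 H3]]].
  rewrite mem_iota => Hk /eqP Hm; exists k; split => //; lia.
exists k; last by apply/eqP.
rewrite mem_iota; lia.
Qed.

Lemma modinj N a k k' : a <= k -> a <= k' -> k < a + N -> k' < a + N ->
  k %% N = k' %% N -> k = k'.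
Proof.
wlog kk : k k' / k <= k'.
  move=> W H1 H2 H3 H4 H5; case: (leqP k k') => L; first exact: W.
  by symmetry; apply: W => //; lia.
move=> H1 H2 H3 H4 H5.
have [j Ej] : exists j, k' = k + j by exists (k' - k); lia.
subst k'.
have : (k + j == k + 0 %[mod N]) by rewrite addn0 H5.
rewrite eqn_modDl mod0n modn_small; last lia.
move/eqP => ->; lia.
Qed.

Lemma sum_inW N a m : 0 < N -> m <= N -> \sum_(i < N) inW N a (a + m) i = m.
Proof.
move=> N0; elim: m => [|m IH] Hm.
  by apply: big1 => i _; rewrite /inW addn0 subnn.
have E : forall i : 'I_N, (inW N a (a + m.+1) i : nat) = inW N a (a + m) i + (val i == (a + m) %% N).
  move=> i.
  have Dj : ~~ (inW N a (a + m) i && (val i == (a + m) %% N)).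
    apply/negP => /andP [/inWP [k [K1 K2 K3]] /eqP K4].
    have := @modinj N a k (a + m) K1 (leq_addr _ _) ltac:(lia) ltac:(lia) ltac:(by rewrite K3 K4).
    lia.
  have E2 : iota a m.+1 = iota a m ++ [:: a + m] by rewrite -addn1 iotaD.
  rewrite /inW !addKn in Dj *; rewrite E2 has_cat /= orbF (eq_sym _ (val i)).
  move: Dj; case: (has _ _); case: (_ == _) => //.
rewrite (eq_bigr _ (fun i _ => E i)) big_split /= IH; last lia.
rewrite (bigD1 (Ordinal (ltn_pmod (a + m) N0))) //= eqxx big1 ?addn0 ?addn1 //.
move=> j Hj; apply/eqP; rewrite eqb0; apply: contra Hj => /eqP Hj.
by apply/eqP; apply: val_inj.
Qed.

Lemma sum_inW' N a b : 0 < N -> a <= b <= a + N -> \sum_(i < N) inW N a b i = b - a.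
Proof.
move=> N0 H; have -> : b = a + (b - a) by lia.
rewrite sum_inW //; lia.
Qed.

Lemma inW_start N T1 T2 S1 S2 i : T1 <= T2 -> T2 <= S1 -> S1 <= S2 -> S2 <= T1 + N ->
  (inW N T2 S2 i && ~~ inW N T1 S1 i) = inW N S1 S2 i.
Proof.
move=> H1 H2 H3 H4; apply/idP/idP.
  move=> /andP [/inWP [k [K1 K2 K3]] Hn]; apply/inWP; exists k; split => //.
  case: (leqP S1 k) => // L; case/negP: Hn; apply/inWP; exists k; split => //; lia.
move=> /inWP [k [K1 K2 K3]]; apply/andP; split.
  apply/inWP; exists k; split => //; lia.
apply/negP => /inWP [k' [K1' K2' K3']].
have := @modinj N T1 k k' ltac:(lia) K1' ltac:(lia) ltac:(lia) ltac:(by rewrite K3 K3').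
lia.
Qed.

Lemma inW_end N T1 T2 S1 S2 i : T1 <= T2 -> T2 <= S1 -> S1 <= S2 -> S2 <= T1 + N ->
  (inW N T1 S1 i && ~~ inW N T2 S2 i) = inW N T1 T2 i.
Proof.
move=> H1 H2 H3 H4; apply/idP/idP.
  move=> /andP [/inWP [k [K1 K2 K3]] Hn]; apply/inWP; exists k; split => //.
  case: (ltnP k T2) => // L; case/negP: Hn; apply/inWP; exists k; split => //; lia.
move=> /inWP [k [K1 K2 K3]]; apply/andP; split.
  apply/inWP; exists k; split => //; lia.
apply/negP => /inWP [k' [K1' K2' K3']].
have := @modinj N T1 k k' ltac:(lia) ltac:(lia) ltac:(lia) ltac:(lia) ltac:(by rewrite K3 K3').
lia.
Qed.

Lemma exists_rep N T i : 0 < N -> i < N -> exists k, [/\ T <= k, k < T + N & k %% N = i].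
Proof.
move=> N0 iN; exists (T + (i + N - T %% N) %% N); split.
- exact: leq_addr.
- by rewrite ltn_add2l ltn_pmod.
rewrite modnDmr.
have -> : T + (i + N - T %% N) = (T %/ N).+1 * N + i.
  move: (divn_eq T N) (ltn_pmod T N0); move: (T %/ N) (T %% N) => q r.
  rewrite mulSn; lia.
by rewrite modnMDl modn_small.
Qed.

Lemma inW_compl N T S i : 0 < N -> i < N -> T <= S <= T + N ->
  ~~ inW N T S i = inW N S (T + N) i.
Proof.
move=> N0 iN H.
have [k [K1 K2 K3]] := @exists_rep N T i N0 iN.
apply/idP/idP.
  move=> Hn; apply/inWP; exists k; split => //.
  case: (leqP S k) => // L; case/negP: Hn; apply/inWP; exists k; split => //.
move=> /inWP [k' [K1' K2' K3']]; apply/negP => /inWP [k'' [K1'' K2'' K3'']].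
have := @modinj N T k' k'' ltac:(lia) ltac:(lia) ltac:(lia) ltac:(lia) ltac:(by rewrite K3' K3'').
lia.
Qed.

Lemma mono_range D (F : nat -> nat) : (forall d, 1 <= d <= D - 1 -> F d <= F d.+1) ->
  forall x y, 1 <= x -> x <= y -> y <= D -> F x <= F y.
Proof.
move=> H x; elim => [|y IH] x1 xy yD; first lia.
case: (leqP x y) => L; last by have -> : x = y.+1 by lia.
apply: leq_trans (IH x1 L ltac:(lia)) _; apply: H; lia.
Qed.

Lemma run_bounds D N (S T : nat -> nat) l u i (h : nat -> bool) :
  0 < N -> 1 <= l <= D ->
  (forall d, 1 <= d <= D - 1 ->
     T d <= T d.+1 /\ T d.+1 <= S d /\ S d <= S d.+1 /\ S d.+1 <= T d + N) ->
  T l <= T 1 -> S (D - l + 1) = S D ->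
  (forall d, 1 <= d <= D - l -> T (d + l) <= S d) ->
  (forall d, 1 <= d <= D - u -> S d <= T (d + u)) ->
  (forall d, 1 <= d <= D -> h d = inW N (T d) (S d) i) ->
  forall a b, run D h a b -> l <= b - a + 1 <= u.
Proof.
move=> N0 Hl Hwin HTl HSl Hlw Huw Hh a b [a1 [ab [bD [Hon [Ha Hb]]]]].
have MT := mono_range (fun d Hd => proj1 (Hwin d Hd)).
have MS := mono_range (fun d Hd => proj1 (proj2 (proj2 (Hwin d Hd)))).
have [k0 [K1 K2 K3]] : exists k, [/\ T a <= k, k < S a & k %% N = i].
  apply/inWP; rewrite -Hh; [apply: Hon; lia | lia].
have Hk : forall j, a + j <= b -> T (a + j) <= k0 < S (a + j).
  elim => [|j IH] Hj; first by rewrite addn0 K1 K2.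
  have /andP [I1 I2] := IH ltac:(lia).
  have := Hon (a + j.+1) ltac:(lia); rewrite Hh; last lia.
  move=> /inWP [k' [L1 L2 L3]].
  have [W1 [W2 [W3 W4]]] := Hwin (a + j) ltac:(lia).
  rewrite addnS in L1 L2 *.
  have := @modinj N (T (a + j)) k0 k' I1 ltac:(lia) ltac:(lia) ltac:(lia) ltac:(by rewrite K3 L3).
  move=> ->; by rewrite L1 L2.
have Hk' : forall d, a <= d <= b -> T d <= k0 < S d.
  move=> d Hd; have := Hk (d - a) ltac:(lia); by have -> : a + (d - a) = d by lia.
have Hstart : a != 1 -> S a.-1 <= k0.
  move=> an1; case: (leqP (S a.-1) k0) => // L.
  move: Ha; rewrite (negbTE an1) /= Hh; last lia.
  case/negP; apply/inWP; exists k0; split => //.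
  have [W1 _] := Hwin a.-1 ltac:(lia).
  have HH : a.-1.+1 = a by lia. rewrite HH in W1.
  lia.
have Hend : b != D -> k0 < T b.+1.
  move=> bn; case: (ltnP k0 (T b.+1)) => // L.
  move: Hb; rewrite (negbTE bn) /= Hh; last lia.
  case/negP; apply/inWP; exists k0; split => //.
  have [_ [_ [W3 _]]] := Hwin b ltac:(lia).
  have := Hk' b ltac:(lia); lia.
have Kb := Hk' b ltac:(lia).
have Ka := Hk' a ltac:(lia).
apply/andP; split.
  case: (leqP l (b - a + 1)) => // L; exfalso.
  case: (eqVneq a 1) => a1'.
    subst a.
    have := Hend ltac:(apply/eqP; lia).
    have := MT b.+1 l ltac:(lia) ltac:(lia) ltac:(lia).
    lia.
  have := Hstart a1'.
  case: (leqP a.-1 (D - l)) => L2.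
    have := Hlw a.-1 ltac:(lia).
    have := Hend ltac:(apply/eqP; lia).
    have := MT b.+1 (a.-1 + l) ltac:(lia) ltac:(lia) ltac:(lia).
    lia.
  have := MS (D - l + 1) a.-1 ltac:(lia) ltac:(lia) ltac:(lia).
  have := MS a D ltac:(lia) ltac:(lia) ltac:(lia).
  lia.
case: (leqP (b - a + 1) u) => // L; exfalso.
have := Huw a ltac:(lia).
have := MT (a + u) b ltac:(lia) ltac:(lia) ltac:(lia).
lia.
Qed.

Lemma S_count_eq (I : instance) (f : schedule I) d :
  S_count f d = \sum_(n < N I) st (D I) (f n) d.
Proof. by rewrite /S_count exchange_big. Qed.

Lemma T_count_eq (I : instance) (f : schedule I) d : 1 <= d ->
  T_count f d = \sum_(n < N I) en (D I) (f n) d.-1.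
Proof. by case: d => [|d] // _; rewrite /T_count exchange_big. Qed.

Lemma sumN1 n (F : 'I_n -> nat) : \sum_(i < n) (F i + 1) = \sum_(i < n) F i + n.
Proof. by rewrite big_split /= sum_nat_const card_ord muln1. Qed.

Lemma sum_bool_le (F : nat -> bool) x : \sum_(1 <= d < x.+1) F d <= x.
Proof.
elim: x => [|x IH]; first by rewrite big_geq.
rewrite big_nat_recr //=; case: (F x.+1); lia.
Qed.

Lemma run_neg_inv D (h : nat -> bool) a b :
  run D (fun e => ~~ h e) a b ->
  1 <= a /\ a <= b /\ b <= D /\
  (forall d, a <= d <= b -> ~~ h d) /\
  ((a == 1) || h a.-1) /\ ((b == D) || h b.+1).
Proof. by rewrite /run !negbK. Qed.

Theorem corollary5p10 (I : instance) (S T : nat -> nat) :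
  LDODOSP_instance I ->
  1 <= lw I <= D I -> 1 <= lo I <= D I ->
  period_counters I S T ->
  feasible_counters I S T <->
  (T 1 = 0 /\
   (forall d, 1 <= d <= D I - 1 ->
      S d <= S d.+1 /\ T d <= T d.+1 /\ T d.+1 <= S d /\ S d.+1 <= T d + N I) /\
   (T (lw I) = 0 /\ S (D I - lw I + 1) = S (D I)) /\
   (forall d, 1 <= d <= D I - lw I -> T (d + lw I) <= S d) /\
   (forall d, 1 <= d <= D I - uw I -> S d <= T (d + uw I)) /\
   (S 1 = S (lo I) /\ T (D I - lo I + 1) = T (D I)) /\
   (forall d, 1 <= d <= D I - lo I -> S (d + lo I) - N I <= T d) /\
   (forall d, 1 <= d <= D I - uo I -> T d + N I <= S (d + uo I)) /\
   (forall d, 1 <= d <= D I -> rl I d <= S d - T d <= ru I d)).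
Proof.
move=> [[D1 [N1 Hru]] [HUw HUo]] Hlw Hlo _.
split.
- move=> [f [Hrep [Hnum [Hwp [Hop _]]]]].
  have P := fun n : 'I_(N I) => @worker_props (D I) (lw I) (uw I) (lo I) (uo I) (f n)
     D1 Hlw Hlo (Hwp n) (fun a b r => Hop n a b (run_neg_inv r)).
  have ES : forall d, 1 <= d <= D I -> S d = \sum_(n < N I) st (D I) (f n) d.
    by move=> d Hd; rewrite (proj1 (Hrep d Hd)) S_count_eq.
  have ET : forall d, 1 <= d <= D I -> T d = \sum_(n < N I) en (D I) (f n) d.-1.
    by move=> d Hd; rewrite (proj2 (Hrep d Hd)) T_count_eq //; lia.
  split.
    rewrite ET; last lia. by rewrite big1 // => n _; rewrite en0.
  split.
    move=> d Hd.
    rewrite (ES d) ?(ES d.+1) ?(ET d) ?(ET d.+1); try lia.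
    split; first by apply: leq_sum => n _; have [H _] := P n; have [] := H d Hd.
    split; first by apply: leq_sum => n _; have [H _] := P n; have [_ []] := H d Hd.
    split; first by apply: leq_sum => n _; have [H _] := P n; have [_ [_ []]] := H d Hd.
    rewrite -sumN1; apply: leq_sum => n _; have [H _] := P n; have [_ [_ [_ ]]] := H d Hd; done.
  split.
    split.
      rewrite ET; last lia. apply: big1 => n _.
      by have [_ [[H _] _]] := P n.
    rewrite !ES; try lia.
    by apply: eq_bigr => n _; have [_ [[_ H] _]] := P n.
  split.
    move=> d Hd; rewrite ES ?ET; try lia.
    by apply: leq_sum => n _; have [_ [_ [H _]]] := P n; apply: H.
  split.
    move=> d Hd; rewrite ES ?ET; try lia.
    by apply: leq_sum => n _; have [_ [_ [_ [H _]]]] := P n; apply: H.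
  split.
    split.
      rewrite !ES; try lia.
      by apply: eq_bigr => n _; have [_ [_ [_ [_ [[H _] _]]]]] := P n.
    rewrite !ET; try lia.
    by apply: eq_bigr => n _; have [_ [_ [_ [_ [[_ H] _]]]]] := P n.
  split.
    move=> d Hd.
    suff : S (d + lo I) <= T d + N I by lia.
    rewrite ES ?ET; try lia.
    rewrite -sumN1; apply: leq_sum => n _.
    by have [_ [_ [_ [_ [_ [H _]]]]]] := P n; apply: H.
  split.
    move=> d Hd; rewrite ES ?ET; try lia.
    rewrite -sumN1; apply: leq_sum => n _.
    by have [_ [_ [_ [_ [_ [_ [H _]]]]]]] := P n; apply: H.
  move=> d Hd.
  have E : S d = T d + num_on f d.
    rewrite ES ?ET // /num_on -big_split /=.
    by apply: eq_bigr => n _; have [_ [_ [_ [_ [_ [_ [_ H]]]]]]] := P n; apply: H.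
  have := Hnum d Hd; rewrite E; lia.
- move=> [HT1 [Hwin [[Hlw1 Hlw2] [Hlwc [Huwc [[Hlo1 Hlo2] [Hloc [Huoc Hr]]]]]]]].
  have N0 : 0 < N I by lia.
  have HTS : forall d, 1 <= d <= D I -> T d <= S d /\ S d <= T d + N I.
    move=> d Hd; split; last first.
      have := Hr d Hd; have := Hru d Hd; lia.
    case: d Hd => [|d] Hd; first lia.
    case: d Hd => [|d] Hd; first lia.
    have := Hwin d.+1 ltac:(lia); lia.
  pose f : schedule I := fun n d => inW (N I) (T d) (S d) n.
  have R : forall d, 1 <= d <= D I -> S_count f d = S d /\ T_count f d = T d.
    move=> d; elim: d => [|d IH] // Hd.
    case: d IH Hd => [|d] IH Hd.
      split.
        rewrite /S_count big_nat1.
        rewrite (eq_bigr (fun n : 'I_(N I) => nat_of_bool (inW (N I) (T 1) (S 1) n))); last first.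
          by move=> n _; rewrite /starts_at eqxx andbT.
        rewrite sum_inW'; [lia | done | have := HTS 1 ltac:(lia); lia].
      by rewrite /T_count big_geq.
    have [IH1 IH2] := IH ltac:(lia).
    have [W1 [W2 [W3 W4]]] := Hwin d.+1 ltac:(lia).
    have [A1 A2] := HTS d.+1 ltac:(lia).
    split.
      rewrite /S_count big_nat_recr //= -/(S_count f d.+1) IH1.
      rewrite (eq_bigr (fun n : 'I_(N I) => nat_of_bool (inW (N I) (S d.+1) (S d.+2) n))); last first.
        move=> n _; rewrite /starts_at /= /f.
        rewrite inW_start //; lia.
      rewrite sum_inW' //; lia.
    rewrite /T_count big_nat_recr //= -/(T_count f d.+1) IH2.
    rewrite (eq_bigr (fun n : 'I_(N I) => nat_of_bool (inW (N I) (T d.+1) (T d.+2) n))); last first.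
      move=> n _; rewrite /ends_at /= /f.
      have -> : (d.+1 == D I) = false by apply/eqP; lia.
      rewrite inW_end //; lia.
    rewrite sum_inW' //; lia.
  exists f; split.
    by move=> d Hd; have [R1 R2] := R d Hd; split.
  have Hwin' : forall d, 1 <= d <= D I - 1 ->
     T d <= T d.+1 /\ T d.+1 <= S d /\ S d <= S d.+1 /\ S d.+1 <= T d + N I.
    by move=> d Hd; have [? [? [? ?]]] := Hwin d Hd.
  split.
    move=> d Hd; rewrite /num_on.
    rewrite sum_inW'; [exact: Hr | done | have := HTS d Hd; lia].
  split.
    move=> n a b Hab.
    apply: (@run_bounds (D I) (N I) S T (lw I) (uw I) n (f n)) => //; first by rewrite Hlw1 HT1.
  split.
    move=> n a b Hab.
    apply: (@run_bounds (D I) (N I) (fun d => T d + N I) S (lo I) (uo I) n (fun d => ~~ f n d)) => //.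
    - move=> d Hd; have [? [? [? ?]]] := Hwin d Hd; lia.
    - by rewrite Hlo1.
    - by rewrite Hlo2.
    - move=> d Hd; have := Hloc d Hd; lia.
    - move=> d Hd; rewrite /f inW_compl //; have := HTS d Hd; lia.
    - exact: run_neg.
  split.
    by move=> n; rewrite HUw; apply: sum_bool_le.
  by move=> n; rewrite HUo; apply: sum_bool_le.
Qed.
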